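(* Let $p$ be an odd prime and $r\in\{1,2,\ldots,(p-1)/2\}$. Then $$\sum_{k=0}^{\frac{p-1}2}\frac{\binom{2k}k^2}{32^k}k(k-1)\cdots(k-r+1)\equiv\begin{cases}0\pmod{p^2}&\text{if }4\mid(p+1-2r),\\ (-1)^{\frac{p-1+2r}4}2^{-\frac{p-1}2}\dfrac{(\frac{p-1}2+r)!}{(\frac{p-1-2r}4)!\,(\frac{p-1+2r}4)!}\pmod{p^2}&\text{if }4\mid(p-1-2r).\end{cases}$$
   Context: Congruences are between rational numbers whose denominators are prime to $p$. *)

(* Defs.v *)
From HB Require Import structures.
From mathcomp Require Import all_boot all_order all_algebra.
Set Implicit Arguments. Unset Strict Implicit. Unset Printing Implicit Defensive.
Import Order.TTheory GRing.Theory Num.Theory.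
Local Open Scope ring_scope.

(* For m = p^2 and a, b with denominators prime to p this is
   the usual congruence modulo p^2. *)
Definition rat_eqmod (m : nat) (a b : rat) : Prop :=
  coprime `|denq ((a - b) / m%:R)|%N m.

(* Main.v *)
Require Import Defs.
From HB Require Import structures.
From mathcomp Require Import all_boot all_order all_algebra.
From mathcomp Require Import ring lra zify.
Import Order.TTheory GRing.Theory Num.Theory.
Local Open Scope ring_scope.

Definition pint (p : nat) (x : rat) :=
  exists (z : int) (d : nat), coprime d p /\ x = z%:~R / d%:R.

Lemma cop_neq0 p d : (1 < p)%N -> coprime d p -> (d%:R : rat) != 0.
Proof.
move=> p1; case: d => [|d _]; last by rewrite pnatr_eq0.
by rewrite /coprime gcd0n => /eqP pe; rewrite pe in p1.
Qed.

Lemma pint_den p x : (1 < p)%N -> pint p x -> coprime `|denq x|%N p.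
Proof.
move=> p1 [z [d [cd ->]]].
have d0 := cop_neq0 _ _ p1 cd.
apply: (coprime_dvdl _ cd).
set y := (z%:~R / d%:R : rat).
have hy : y * d%:R = z%:~R by rewrite /y divfK.
have e : numq y * d%:Z = z * denq y.
  apply/eqP; rewrite -(eqr_int rat) !intrM -hy numqE.
  by rewrite mulrAC.
have : (`|denq y| %| `|numq y| * d)%N.
  apply/dvdnP; exists `|z|%N.
  by rewrite -[d]/(`|d%:Z|%N) -!abszM e.
by rewrite Gauss_dvdr // coprime_sym coprime_num_den.
Qed.

Lemma pint_add p x y : (1 < p)%N -> pint p x -> pint p y -> pint p (x + y).
Proof.
move=> p1 [z1 [d1 [c1 ->]]] [z2 [d2 [c2 ->]]].
exists (z1 * d2%:Z + z2 * d1%:Z), (d1 * d2)%N; split; first by rewrite coprimeMl c1.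
have h1 := cop_neq0 _ _ p1 c1; have h2 := cop_neq0 _ _ p1 c2.
have nz : forall n : nat, (n%:Z)%:~R = n%:R :> rat by [].
rewrite rmorphD !rmorphM /= !nz. by field; rewrite h1 h2.
Qed.

Lemma pint_mul p x y : pint p x -> pint p y -> pint p (x * y).
Proof.
move=> [z1 [d1 [c1 ->]]] [z2 [d2 [c2 ->]]].
exists (z1 * z2), (d1 * d2)%N; split; first by rewrite coprimeMl c1.
by rewrite rmorphM natrM /= invfM mulrACA.
Qed.

Lemma pint_int p (z : int) : (1 < p)%N -> pint p z%:~R.
Proof. move=> p1; exists z, 1%N; split; [exact: coprime1n | by rewrite divr1]. Qed.

Lemma pint_inv p (d : nat) : coprime d p -> pint p (d%:R)^-1.
Proof. move=> c; exists 1, d; split => //; by rewrite mul1r. Qed.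

Lemma pint_sum p n (F : nat -> rat) : (1 < p)%N -> (forall i, (i < n)%N -> pint p (F i)) ->
  pint p (\sum_(i < n) F i).
Proof.
move=> p1 h; elim: n h => [|n IH] h; first by rewrite big_ord0; exact: (pint_int _ 0 p1).
rewrite big_ord_recr /=; apply: pint_add => //; last exact: h.
by apply: IH => i /ltnW; apply: h.
Qed.

Lemma fact2 k : ((k.*2)`! = 2 ^ k * k`! * \prod_(j < k) (j.*2.+1))%N.
Proof.
elim: k => [|k IH]; first by rewrite big_ord0.
rewrite doubleS !factS IH big_ord_recr /= expnS -addnn.
ring.
Qed.

Lemma ffactD a b c : ((a + b) ^_ (a + c) = (a + b) ^_ a * b ^_ c)%N.
Proof.
elim: a => [|a IH]; first by rewrite !add0n ffactn0 mul1n.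
by rewrite !addSn !ffactSS IH mulnA.
Qed.

Lemma N1 n k : (n ^_ k * (n + k)`! = n`! * \prod_(j < k) ((n - j) * (n + j).+1))%N.
Proof.
elim: k => [|k IH]; first by rewrite big_ord0 addn0 ffactn0 mul1n muln1.
rewrite ffactnSr big_ord_recr /= addnS factS [in RHS]mulnA -IH; ring.
Qed.

Lemma L2 n k : ('C(n, k) * (n + k) ^_ n * k`! * k`! = n`! * \prod_(j < k) ((n - j) * (n + j).+1))%N.
Proof.
rewrite -N1 -(bin_ffact n k) -(ffact_fact (leq_addr k n)) addKn; ring.
Qed.

Definition Pn k := (\prod_(j < k) (j.*2.+1))%N.
Definition Bz (p k : nat) : int := \prod_(j < k) (((j.*2.+1) ^ 2)%:Z - (p ^ 2)%:Z).

Lemma cong p k : exists z : int, (Pn k)%:Z ^+ 2 - Bz p k = (p ^ 2)%:Z * z.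
Proof.
elim: k => [|k [z IH]]; first by exists 0; rewrite /Pn /Bz !big_ord0 expr1n subrr mulr0.
exists ((((k.*2.+1) ^ 2)%:Z) * z + Bz p k).
rewrite /Pn /Bz !big_ord_recr /= -/(Pn k) -/(Bz p k).
have -> : Bz p k = (Pn k)%:Z ^+ 2 - (p ^ 2)%:Z * z by rewrite -IH; ring.
rewrite PoszM. ring.
Qed.

Lemma Bz_eq p n k : p = n.*2.+1 -> (k <= n)%N ->
  (Bz p k)%:~R = (- 4%:R) ^+ k * (\prod_(j < k) ((n - j) * (n + j).+1))%N%:R :> rat.
Proof.
move=> ->; elim: k => [|k IH] hk; first by rewrite /Bz !big_ord0 expr0 mulr1.
rewrite /Bz big_ord_recr /= -/(Bz _ k) rmorphM /= IH ?(ltnW hk) //.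
rewrite big_ord_recr /= natrM exprSr.
have e : (((k.*2.+1) ^ 2)%:Z - ((n.*2.+1) ^ 2)%:Z)%:~R = - 4%:R * ((n - k) * (n + k).+1)%:R :> rat.
  rewrite rmorphB /= natrM natrB ?(ltnW hk) //.
  have nz : forall m : nat, (m%:Z)%:~R = m%:R :> rat by [].
  rewrite !nz -!muln2; ring.
rewrite e; ring.
Qed.

Lemma term n r k : (k <= n)%N ->
  ('C(k.*2, k) ^ 2)%:R / 32%:R ^+ k * (k ^_ r)%:R
  - ('C(n, k) * (n + k) ^_ (n + r))%:R * (- 2%:R^-1) ^+ k / n`!%:R
  = (k ^_ r)%:R * (((Pn k)%:Z ^+ 2 - Bz (n.*2.+1) k)%:~R) / (8 ^ k * k`! ^ 2)%:R :> rat.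
Proof.
move=> hk.
have kf : (k`!%:R : rat) != 0 by rewrite pnatr_eq0 -lt0n fact_gt0.
have nf : (n`!%:R : rat) != 0 by rewrite pnatr_eq0 -lt0n fact_gt0.
have hc : ('C(k.*2, k))%:R = (2 ^ k * Pn k)%:R / k`!%:R :> rat.
  have := bin_fact (leq_addr k k); rewrite addnK addnn fact2 -/(Pn k) => e.
  apply: (mulIf kf); rewrite divfK //; apply: (mulIf kf).
  by rewrite -!natrM -mulnA e; ring.
have hb : ('C(n, k) * (n + k) ^_ (n + r))%:R
   = (k ^_ r)%:R * n`!%:R * (\prod_(j < k) ((n - j) * (n + j).+1))%N%:R / (k`!%:R) ^+ 2 :> rat.
  rewrite ffactD; apply: (mulIf (expf_neq0 2 kf)); rewrite divfK ?expf_neq0 //.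
  rewrite -!natrM -!natrX -!natrM -[X in _ = X%:R]mulnA -L2; congr (_ %:R); ring.
rewrite hb rmorphB /= rmorphXn /= (@Bz_eq _ n) // natrX hc !natrM !natrX.
set t := (2%:R : rat) ^+ k.
have t0 : t != 0 by rewrite expf_neq0.
have e32 : (32%:R : rat) ^+ k = t ^+ 5 by rewrite /t -exprM mulnC exprM; congr (_ ^+ _).
have e8 : (8%:R : rat) ^+ k = t ^+ 3 by rewrite /t -exprM mulnC exprM; congr (_ ^+ _).
have e4 : (- 4%:R : rat) ^+ k = (-1) ^+ k * t ^+ 2.
  by rewrite -(mulN1r 4%:R) exprMn /t -exprM mulnC exprM; congr (_ * _ ^+ _).
have e2 : (- 2%:R^-1 : rat) ^+ k = (-1) ^+ k / t.
  by rewrite -(mulN1r (2%:R^-1)) exprMn exprVn.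
have nz : forall m : nat, (m%:Z)%:~R = m%:R :> rat by [].
rewrite e32 e8 e4 e2 !nz -/t.
field.
by rewrite t0 kf nf.
Qed.

Lemma coef_CX (c : rat) n j : ((c%:P + 'X) ^+ n)`_j = c ^+ (n - j) *+ 'C(n, j).
Proof.
rewrite exprDn coef_sum.
under eq_bigr => i _ do rewrite coefMn -rmorphXn coefCM coefXn.
case: (ltnP j n.+1) => hj.
  rewrite (bigD1 (Ordinal hj)) //= eqxx mulr1 big1 ?addr0 //.
  move=> i /eqP hi;
  case: eqP => [e|_]; last by rewrite mulr0 mul0rn.
  by exfalso; apply: hi; apply: val_inj; rewrite /= e.
rewrite bin_small // mulr0n big1 // => i _.
have -> : (j == i) = false by apply/negbTE/eqP => e; move: (ltn_ord i); rewrite -e ltnNge hj.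
by rewrite mulr0 mul0rn.
Qed.

Definition F n : {poly rat} := 'X^n * (1%:P + 'X) ^+ n.

Lemma coefF n i : (F n)`_(n + i) = 'C(n, i)%:R.
Proof.
rewrite /F coefXnM ltnNge leq_addr /= addKn coef_CX expr1n.
by [].
Qed.

Lemma derivn_add (q : {poly rat}) a b : q^`(a + b) = q^`(a)^`(b).
Proof. by elim: b => [|b IH]; rewrite ?addn0 ?derivn0 // addnS !derivnS IH. Qed.

Lemma derivn_compXC (q : {poly rat}) c m :
  (q \Po ('X + c%:P))^`(m) = q^`(m) \Po ('X + c%:P).
Proof.
elim: m => [|m IH]; first by rewrite !derivn0.
by rewrite !derivnS IH deriv_comp derivD derivX derivC addr0 mulr1.
Qed.

Lemma comp_exp (q s : {poly rat}) m : (q ^+ m) \Po s = (q \Po s) ^+ m.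
Proof.
elim: m => [|m IH]; first by rewrite !expr0 -polyC1 comp_polyC.
by rewrite !exprS comp_polyM IH.
Qed.

Definition xh : rat := - 2%:R^-1.
Definition Rp n : {poly rat} := ((- 4%:R^-1)%:P + 'X ^+ 2) ^+ n.

Lemma F_Rp n : F n = Rp n \Po ('X + (2%:R^-1)%:P).
Proof.
rewrite /F /Rp comp_exp -exprMn; congr (_ ^+ _).
rewrite comp_polyD comp_polyC comp_exp comp_polyX.
have h : (4%:R^-1 : rat) = 2%:R^-1 * 2%:R^-1 by rewrite -invfM -natrM.
have h1 : (1 : rat) = 2%:R^-1 + 2%:R^-1 by field.
rewrite h h1 polyCN polyCM polyCD; ring.
Qed.

Lemma Rp_coef n N : (Rp n)`_N =
  if (2 %| N)%N then (- 4%:R^-1) ^+ (n - N %/ 2) *+ 'C(n, N %/ 2) else 0.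
Proof.
have -> : Rp n = ((- 4%:R^-1)%:P + 'X) ^+ n \Po 'X^2.
  by rewrite /Rp comp_exp comp_polyD comp_polyC comp_polyX.
by rewrite coef_comp_poly_Xn // coef_CX.
Qed.

Lemma hornsum n r : \sum_(k < n.+1) ('C(n, k) * (n + k) ^_ (n + r))%:R * xh ^+ k
  = xh ^+ r * ((F n)^`(n + r)).[xh].
Proof.
set G := (F n)^`(n + r).
have cf : forall i, ('X^r * G)`_i = ('C(n, i) * (n + i) ^_ (n + r))%:R.
  move=> i; rewrite coefXnM /G coef_derivn.
  case: ltnP => hi.
    by rewrite ffact_small ?muln0 // ltn_add2l.
  by rewrite -addnA subnKC // coefF natrM mulr_natr.
rewrite -hornerXn -hornerM (@horner_coef_wide _ (maxn (size ('X^r * G)) n.+1)) ?leq_maxl //.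
rewrite (@big_ord_widen _ _ _ _ (maxn (size ('X^r * G : {poly rat})) n.+1) (fun i => ('C(n, i) * (n + i) ^_ (n + r))%:R * xh ^+ i)) ?leq_maxr //.
rewrite big_mkcond /=; apply: eq_bigr => i _; rewrite cf.
by case: ltnP => // hi; rewrite bin_small // mul0n mul0r.
Qed.

Lemma Tclosed n r : \sum_(k < n.+1) ('C(n, k) * (n + k) ^_ (n + r))%:R * xh ^+ k / n`!%:R
  = xh ^+ r * (if (2 %| n + r)%N then (- 4%:R^-1) ^+ (n - (n + r) %/ 2) *+ 'C(n, (n + r) %/ 2) else 0)
    * ((n + r)`!)%:R / n`!%:R.
Proof.
rewrite -mulr_suml hornsum; congr (_ * _).
rewrite /xh F_Rp derivn_compXC horner_comp !hornerE addrC subrr horner_coef0.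
by rewrite coef_derivn addn0 ffactnn Rp_coef -[RHS]mulrA [in RHS]mulr_natr.
Qed.

Lemma fact_cop p k : prime p -> (k < p)%N -> coprime k`! p.
Proof.
move=> pp; elim: k => [|k IH] hk; first by rewrite coprime1n.
rewrite factS coprimeMl IH ?(ltnW hk) // andbT coprime_sym prime_coprime //.
apply/negP => /dvdn_leq; rewrite ltn0Sn => /(_ isT); rewrite leqNgt hk.
by [].
Qed.

Lemma final_alg r m N :
  xh ^+ r * ((- 4%:R^-1) ^+ m *+ 'C(r + m + m, r + m)) * (N`!)%:R / ((r + m + m)`!)%:R
  = (-1) ^+ (r + m) * 2%:R ^- (r + m + m) * N`!%:R / (m`! * (r + m)`!)%:R :> rat.
Proof.
have hb := bin_fact (leq_addr m (r + m)); rewrite addKn in hb.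
have kf : forall q, (q`!%:R : rat) != 0 by move=> q; rewrite pnatr_eq0 -lt0n fact_gt0.
have ec : ('C(r + m + m, r + m))%:R = ((r + m + m)`!)%:R / ((r + m)`!%:R * m`!%:R) :> rat.
  apply: (mulIf (mulf_neq0 (kf (r+m)%N) (kf m))); rewrite divfK ?mulf_neq0 //.
  by rewrite -!natrM hb.
rewrite -mulr_natr ec natrM /xh.
set t := (2%:R : rat)^-1.
have t0 : t != 0 by rewrite invr_eq0 pnatr_eq0.
have e4 : (- 4%:R^-1 : rat) = - (t * t) by rewrite /t -invfM -natrM.
rewrite e4 -exprVn -/t.
rewrite -(mulN1r t) -(mulN1r (t * t)) !exprMn !exprD -!exprMn !exprMn.
field.
by rewrite !kf.
Qed.

Theorem theorem2p3 (p r : nat) :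
  prime p -> odd p -> (1 <= r)%N -> (r <= (p - 1)./2)%N ->
  let S : rat := \sum_(k < (p - 1)./2.+1)
      ('C(k.*2, k) ^ 2)%:R / 32%:R ^+ k * (k ^_ r)%:R in
  ((4 %| p + 1 - r.*2)%N -> rat_eqmod (p ^ 2) S 0) /\
  ((4 %| p - 1 - r.*2)%N ->
     rat_eqmod (p ^ 2) S
       ((-1) ^+ ((p - 1 + r.*2) %/ 4) * 2%:R ^- ((p - 1)./2)
        * ((p - 1)./2 + r)`!%:R
        / (((p - 1 - r.*2) %/ 4)`! * ((p - 1 + r.*2) %/ 4)`!)%:R)).
Proof.
move=> pp po r1 rn S.
have p1 : (1 < p)%N := prime_gt1 pp.
have hp : p = ((p - 1)./2).*2.+1.
  lia.
rewrite /S; set n := (p - 1)./2 in rn hp *.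
set S' := \sum_(k < n.+1) _.
set T := \sum_(k < n.+1) ('C(n, k) * (n + k) ^_ (n + r))%:R * xh ^+ k / n`!%:R.
have key : pint p ((S' - T) / (p ^ 2)%:R).
  rewrite /S' /T -sumrB mulr_suml.
  apply: (@pint_sum p n.+1 (fun k => (('C(k.*2, k) ^ 2)%:R / 32%:R ^+ k * (k ^_ r)%:R -
      ('C(n, k) * (n + k) ^_ (n + r))%:R * xh ^+ k / n`!%:R) / (p ^ 2)%:R)) => // k hk.
  rewrite term // -hp.
  have [z hz] := cong p k.
  rewrite hz rmorphM /=.
  have p2 : ((p ^ 2)%:R : rat) != 0 by rewrite pnatr_eq0 expn_eq0 andbT -lt0n prime_gt0.
  have hd : coprime (8 ^ k * k`! ^ 2) p.
    rewrite coprimeMl coprimeXl ?coprimeXl //; first by apply: (fact_cop _ _ pp); lia.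
    by rewrite -[8%N]/(2 ^ 3)%N coprimeXl // coprime2n.
  have -> : ((k ^_ r)%:R * (((p ^ 2)%:Z)%:~R * z%:~R) / (8 ^ k * k`! ^ 2)%:R) / (p ^ 2)%:R
     = ((k ^_ r)%:Z * z)%:~R * ((8 ^ k * k`! ^ 2)%:R)^-1 :> rat.
    have nz : forall m : nat, (m%:Z)%:~R = m%:R :> rat by [].
    rewrite !nz intrM nz. field.
    have p0 : (p%:R : rat) != 0 by rewrite pnatr_eq0 -lt0n prime_gt0.
    by rewrite p0 !pnatr_eq0 -!lt0n fact_gt0 expn_gt0.
  by apply: pint_mul; [apply: pint_int | apply: pint_inv].
have eqm : forall V, V = T -> rat_eqmod (p ^ 2) S' V.
  by move=> V ->; rewrite /rat_eqmod; apply: coprimeXr; apply: pint_den.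
have TC : T = _ := Tclosed n r.
split => h4.
  apply: eqm; rewrite TC.
  have -> : (2 %| n + r)%N = false by move: h4; rewrite hp; lia.
  by rewrite mulr0 !mul0r.
apply: eqm; rewrite TC.
have [m hm] : exists m : nat, (n = r + m + m)%N by exists ((n - r)./2); move: h4; rewrite hp; lia.
have -> : (2 %| n + r)%N = true by rewrite hm; lia.
have -> : ((n + r) %/ 2 = r + m)%N by rewrite hm; lia.
have -> : (n - (r + m) = m)%N by rewrite hm; lia.
have -> : ((p - 1 + r.*2) %/ 4 = r + m)%N by rewrite hp hm; lia.
have -> : ((p - 1 - r.*2) %/ 4 = m)%N by rewrite hp hm; lia.
rewrite hm final_alg.
by [].
Qed.
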